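(* Let $m\ge3$. The matrices $\mathcal{M}^{t,p}_{i,j}$ ($(i,j,t,p)\in\mathcal{I}_{(m,m)}$), $\mathcal{R}^{t,p}_{i,j}$ ($(i,j,t,p)\in\mathcal{I}_{(m,m+1)}$), $\mathcal{L}^{t,p}_{i,j}$ ($(i,j,t,p)\in\mathcal{I}_{(m+1,m)}$) and $\mathcal{F}^{t,p}_{i,j}$ ($(i,j,t,p)\in\mathcal{I}_{(m+1,m+1)}$) form a basis of the Terwilliger algebra $T=T(x_0)$ of $2.O_{m+1}$.
   Context: $S=\{1,\dots,2m+1\}$, $X=\binom{S}{m}\cup\binom{S}{m+1}$; the doubled Odd graph $2.O_{m+1}$ has vertex set $X$, two vertices adjacent iff one is a proper subset of the other, with distance $\partial$. $x_0=\{1,\dots,m\}$. $T$ is the subalgebra of complex $X\times X$ matrices generated by the adjacency matrix $A_1$ and the diagonal matrices $E^*_i$ ($0\le i\le 2m+1$) with $(y,y)$-entry $1$ iff $\partial(x_0,y)=i$. For $y,z\subseteq S$, $\varrho(y,z)=(|x_0\cap y|,|x_0\cap z|,|y\cap z|,|x_0\cap y\cap z|)$; for $a,b\in\{m,m+1\}$, $\mathcal{I}_{(a,b)}=\{\varrho(y,z):y\in\binom{S}{a},z\in\binom{S}{b}\}$ and $X^{(i,j,t,p)}_{(a,b)}=\{(y,z)\in\binom{S}{a}\times\binom{S}{b}:\varrho(y,z)=(i,j,t,p)\}$. The matrices $\mathcal{M}^{t,p}_{i,j}$, $\mathcal{R}^{t,p}_{i,j}$, $\mathcal{L}^{t,p}_{i,j}$,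 $\mathcal{F}^{t,p}_{i,j}$ are the $X\times X$ $0/1$ matrices whose $(y,z)$-entry is $1$ iff $(y,z)$ lies in $X^{(i,j,t,p)}_{(m,m)}$, $X^{(i,j,t,p)}_{(m,m+1)}$, $X^{(i,j,t,p)}_{(m+1,m)}$, $X^{(i,j,t,p)}_{(m+1,m+1)}$ respectively. *)

(* Defs.v *)
From mathcomp Require Import all_boot all_order all_algebra.

Import GRing.Theory Num.Theory.
Local Open Scope ring_scope.

(* Ground set S = {1,...,2m+1} is modelled by 'I_(2m+1) (k stands for k+1). *)
Notation Sset m := {set 'I_(2 * m + 1)}.

(* Vertices of the doubled Odd graph 2.O_{m+1}: m- and (m+1)-subsets of S. *)
Definition inX (m : nat) (y : Sset m) : bool := (#|y| == m)%N || (#|y| == m.+1)%N.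
Definition Xt (m : nat) : finType := {y : Sset m | inX m y}.

Definition adjb (m : nat) (y z : Sset m) : bool := (y \proper z) || (z \proper y).

Fixpoint connk (m k : nat) (y z : Sset m) : bool :=
  if k is k'.+1 then [exists w : Sset m, inX m w && adjb m y w && connk m k' w z]
  else y == z.

(* graph distance: least k with a walk of length k (graph is connected,
   any distance is < 2^(2m+1)) *)
Definition dist (m : nat) (y z : Sset m) : nat :=
  find (fun k => connk m k y z) (iota 0 (2 ^ (2 * m + 1))).

Definition x0 (m : nat) : Sset m := [set i : 'I_(2 * m + 1) | (i < m)%N].

Section Mats.
Variable C : numClosedFieldType.

Definition mxX (m : nat) (f : Xt m -> Xt m -> C) : 'M[C]_(#|Xt m|) :=
  \matrix_(i, j) f (enum_val i) (enum_val j).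

Definition A1 (m : nat) : 'M[C]_(#|Xt m|) :=
  mxX m (fun y z => (adjb m (val y) (val z))%:R).

Definition Estar (m i : nat) : 'M[C]_(#|Xt m|) :=
  mxX m (fun y z => ((y == z) && (dist m (x0 m) (val y) == i)%N)%:R).

Definition genmx (m : nat) (g : option 'I_(2 * m + 2)) : 'M[C]_(#|Xt m|) :=
  if g is Some i then Estar m i else A1 m.

Definition wordmx (m : nat) (w : seq (option 'I_(2 * m + 2))) : 'M[C]_(#|Xt m|) :=
  foldr (fun g M => genmx m g *m M) 1%:M w.

(* membership in the Terwilliger algebra T = subalgebra generated by A_1 and
   the E*_i : linear combinations of products of generators (empty product = I) *)
Definition inT (m : nat) (M : 'M[C]_(#|Xt m|)) : Prop :=
  exists (s : seq (seq (option 'I_(2 * m + 2)))) (c : seq C),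
    M = \sum_(k < size s) c`_k *: wordmx m (nth [::] s k).

Definition rho (m : nat) (y z : Sset m) : nat * nat * nat * nat :=
  (#|x0 m :&: y|, #|x0 m :&: z|, #|y :&: z|, #|x0 m :&: y :&: z|)%N.

Definition quads (n : nat) : seq (nat * nat * nat * nat) :=
  flatten [seq flatten [seq [seq (a, b, c, d) | c <- iota 0 n, d <- iota 0 n]
                       | b <- iota 0 n] | a <- iota 0 n].

Definition realized (m a b : nat) (q : nat * nat * nat * nat) : bool :=
  [exists y : Sset m, exists z : Sset m,
     [&& #|y| == a, #|z| == b & rho m y z == q]%N].

(* 0/1 matrix of X^{q}_{(a,b)} : M (a=b=m), R (m,m+1), L (m+1,m), F (m+1,m+1) *)
Definition Imx (m a b : nat) (q : nat * nat * nat * nat) : 'M[C]_(#|Xt m|) :=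
  mxX m (fun y z => ([&& #|val y| == a, #|val z| == b & rho m (val y) (val z) == q]%N)%:R).

Definition claimed_basis (m : nat) : seq 'M[C]_(#|Xt m|) :=
  flatten [seq [seq Imx m ab.1 ab.2 q | q <- quads (2 * m + 2) & realized m ab.1 ab.2 q]
          | ab <- [:: (m, m); (m, m.+1); (m.+1, m); (m.+1, m.+1)]].

End Mats.

(* Main.v *)
Require Import Defs.
From mathcomp Require Import all_boot all_order all_algebra.
From mathcomp Require Import zify.
Set Implicit Arguments.
Unset Strict Implicit.
Unset Printing Implicit Defensive.
Import GRing.Theory Num.Theory.


Section P1.
Local Open Scope ring_scope.
Variable C : numClosedFieldType.
Variable m : nat.
Local Notation X := (Xt m).
Local Notation MX := 'M[C]_(#|Xt m|).

Definition ent (M : MX) (y z : X) : C := M (enum_rank y) (enum_rank z).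

Lemma entX f y z : ent (mxX C m f) y z = f y z.
Proof. by rewrite /ent /mxX mxE !enum_rankK. Qed.

Lemma mx_ent (M N : MX) : (forall y z, ent M y z = ent N y z) -> M = N.
Proof.
move=> H; apply/matrixP => i j; have := H (enum_val i) (enum_val j).
by rewrite /ent !enum_valK.
Qed.

Lemma ent_mul (M N : MX) y z : ent (M *m N) y z = \sum_w ent M y w * ent N w z.
Proof.
rewrite /ent mxE (reindex (@enum_rank X)) //.
by exists enum_val => x _; [rewrite enum_rankK | rewrite enum_valK].
Qed.

Lemma ent_add (M N : MX) y z : ent (M + N) y z = ent M y z + ent N y z.
Proof. by rewrite /ent mxE. Qed.
Lemma ent_opp (M : MX) y z : ent (- M) y z = - ent M y z.
Proof. by rewrite /ent mxE. Qed.
Lemma ent_scale a (M : MX) y z : ent (a *: M) y z = a * ent M y z.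
Proof. by rewrite /ent mxE. Qed.
Lemma ent0 y z : ent 0 y z = 0.
Proof. by rewrite /ent mxE. Qed.
Lemma ent_sum (I : finType) (F : I -> MX) y z :
  ent (\sum_i F i) y z = \sum_i ent (F i) y z.
Proof. by rewrite /ent summxE. Qed.

Lemma wordmx_cat w1 w2 : wordmx C m (w1 ++ w2) = wordmx C m w1 *m wordmx C m w2.
Proof.
elim: w1 => [|g w IH] /=; first by rewrite mul1mx.
by rewrite IH mulmxA.
Qed.

Lemma inT0 : inT C m 0.
Proof. by exists [::], [::]; rewrite big_ord0. Qed.

Lemma inT_word w : inT C m (wordmx C m w).
Proof. by exists [:: w], [:: 1]; rewrite big_ord1 scale1r. Qed.

Lemma inT_add M N : inT C m M -> inT C m N -> inT C m (M + N).
Proof.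
move=> [s1 [c1 ->]] [s2 [c2 ->]].
exists (s1 ++ s2), (mkseq (fun k => c1`_k) (size s1) ++ c2).
rewrite size_cat big_split_ord /=; congr (_ + _); apply: eq_bigr => i _.
  by rewrite nth_cat size_mkseq ltn_ord nth_mkseq // nth_cat ltn_ord.
by rewrite nth_cat size_mkseq ltnNge leq_addr /= addKn nth_cat ltnNge leq_addr /= addKn.
Qed.

Lemma inT_scale a M : inT C m M -> inT C m (a *: M).
Proof.
move=> [s [c ->]]; exists s, (mkseq (fun k => a * c`_k) (size s)).
rewrite scaler_sumr; apply: eq_bigr => i _.
by rewrite nth_mkseq // scalerA.
Qed.

Lemma inT_sum (I : finType) (F : I -> MX) : (forall i, inT C m (F i)) -> inT C m (\sum_i F i).
Proof.
move=> H; apply: (big_ind (inT C m)); [exact: inT0 | exact: inT_add | by []].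
Qed.

Lemma inT_opp M : inT C m M -> inT C m (- M).
Proof. by move=> H; rewrite -scaleN1r; apply: inT_scale. Qed.

Lemma inT_wordmul w M : inT C m M -> inT C m (wordmx C m w *m M).
Proof.
move=> [s [c ->]]; rewrite mulmx_sumr; apply: inT_sum => i.
by rewrite -scalemxAr -wordmx_cat; apply: inT_scale; apply: inT_word.
Qed.

Lemma inT_mul M N : inT C m M -> inT C m N -> inT C m (M *m N).
Proof.
move=> [s [c ->]] HN; rewrite mulmx_suml; apply: inT_sum => i.
by rewrite -scalemxAl; apply: inT_scale; apply: inT_wordmul.
Qed.

Lemma inT_A1 : inT C m (A1 C m).
Proof. by have := inT_word [:: None]; rewrite /= mulmx1. Qed.

Lemma inT_Estar i : (i < 2 * m + 2)%N -> inT C m (Estar C m i).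
Proof. by move=> Hi; have := inT_word [:: Some (Ordinal Hi)]; rewrite /= mulmx1. Qed.

End P1.


Section P2.
Variable m : nat.
Local Notation T := ('I_(2 * m + 1)).
Implicit Types A B y z w : {set T}.

Lemma card_ins e A y : e \notin y -> #|A :&: (e |: y)| = (e \in A) + #|A :&: y|.
Proof.
move=> ey; rewrite (cardsD1 e) !inE eqxx /= andbT; congr (_ + _)%N.
apply: eq_card => x; rewrite !inE; case: eqP => [->|] //=.
by rewrite (negbTE ey) andbF.
Qed.

Lemma card_rem e A y : e \in y -> #|A :&: y| = (e \in A) + #|A :&: (y :\ e)|.
Proof.
move=> ey; rewrite (cardsD1 e) !inE ey andbT; congr (_ + _)%N.
by rewrite setIDA.
Qed.

Lemma card_sub_step A B y w : B \subset A -> y \subset w ->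
  (#|B :&: w| <= #|B :&: y| + (#|A :&: w| - #|A :&: y|))%N.
Proof.
move=> sBA syw.
have sub: B :&: w \subset (B :&: y) :|: ((A :&: w) :\: (A :&: y)).
  apply/subsetP => x; rewrite !inE => /andP[xB xw].
  by rewrite xB xw (subsetP sBA x xB) /=; case: (x \in y).
have cd : #|(A :&: w) :\: (A :&: y)| = (#|A :&: w| - #|A :&: y|)%N.
  have := cardsID (A :&: y) (A :&: w).
  have -> : A :&: w :&: (A :&: y) = A :&: y.
    by apply/setIidPr/subsetP => x; rewrite !inE => /andP[-> /(subsetP syw) ->].
  lia.
rewrite -cd; apply: leq_trans (subset_leq_card sub) _; exact: leq_card_setU.
Qed.

Lemma card_x0 : #|x0 m| = m.
Proof.
have Hm : (m <= 2 * m + 1)%N by lia.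
have -> : x0 m = [set widen_ord Hm j | j : 'I_m].
  apply/setP => i; rewrite !inE; apply/idP/imsetP => [lt|[j _ ->]] /=; last exact: ltn_ord.
  by exists (Ordinal lt) => //; apply: val_inj.
rewrite card_imset ?card_ord // => a b /(congr1 val) /= /val_inj //.
Qed.

Lemma card_T : #|[set: T]| = (2 * m + 1)%N.
Proof. by rewrite cardsT card_ord. Qed.

Lemma cardI_x0 y : (#|x0 m :&: y| <= m)%N.
Proof. by apply: leq_trans (subset_leq_card (subsetIl _ _)) _; rewrite card_x0. Qed.

Definition fpot y : nat := (2 * (m - #|x0 m :&: y|) + (#|y| - m))%N.

Lemma inXP y : inX m y -> #|y| = m \/ #|y| = m.+1.
Proof. by rewrite /inX => /orP[/eqP|/eqP]; auto. Qed.

Lemma fpot_step y w : inX m y -> inX m w -> adjb m y w -> (fpot w <= (fpot y).+1)%N.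
Proof.
move=> /inXP hy /inXP hw; rewrite /adjb /fpot => /orP[] pr.
  have: (#|y| < #|w|)%N by apply: proper_card.
  have: (#|x0 m :&: y| <= #|x0 m :&: w|)%N.
    by apply: subset_leq_card; apply: setIS; apply: proper_sub.
  have := cardI_x0 y; have := cardI_x0 w; lia.
have: (#|w| < #|y|)%N by apply: proper_card.
have := card_sub_step (subsetT (x0 m)) (proper_sub pr).
rewrite !setTI.
have := cardI_x0 y; have := cardI_x0 w; lia.
Qed.

Lemma connk_bound k y z : inX m y -> connk m k y z -> (fpot z <= fpot y + k)%N.
Proof.
elim: k y => [|k IH] y hy /=; first by move=> /eqP ->; rewrite addn0.
move=> /existsP[w /andP[/andP[hw adj] c]].
have := IH w hw c; have := fpot_step hy hw adj; lia.
Qed.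

Lemma connk_snoc k y w z : connk m k y w -> inX m z -> adjb m w z -> connk m k.+1 y z.
Proof.
elim: k y => [|k IH] y /=.
  by move=> /eqP -> hz adj; apply/existsP; exists z; rewrite hz adj eqxx.
move=> /existsP[u /andP[/andP[hu adj] c]] hz adj'.
by apply/existsP; exists u; rewrite hu adj; exact: (IH u c hz adj').
Qed.

Lemma fpot_x0 : fpot (x0 m) = 0%N.
Proof. by rewrite /fpot setIid card_x0 subnn. Qed.

Lemma connk_reach k y : inX m y -> fpot y = k -> connk m k (x0 m) y.
Proof.
elim: k y => [|k IH] y hy.
  rewrite /fpot => h0 /=.
  have hc := cardI_x0 y.
  have e1 : #|x0 m :&: y| = m by case: (inXP hy) => hy'; lia.
  have sub : x0 m \subset y.
    apply/setIidPl/eqP; rewrite eqEcard subsetIl card_x0 e1 leqnn //.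
  rewrite eqEcard sub card_x0; case: (inXP hy) => hy'; lia.
move=> hf; have hc := cardI_x0 y.
case: (inXP hy) => hy'.
-
  have lt : (#|x0 m :&: y| < m)%N by move: hf; rewrite /fpot hy'; lia.
  have : (0 < #|x0 m :\: y|)%N.
    have := cardsID y (x0 m); rewrite card_x0; lia.
  rewrite card_gt0 => /set0Pn[e]; rewrite inE => /andP[ey ex].
  have hw : inX m (e |: y) by rewrite /inX cardsU1 ey hy' eqxx orbT.
  apply: (connk_snoc (w := e |: y)); last by rewrite /adjb properUr ?orbT // sub1set.
    apply: IH => //; move: hf; rewrite /fpot cardsU1 ey hy' card_ins // ex; lia.
  exact: hy.
- have : (0 < #|y :\: x0 m|)%N.
    have := cardsID (x0 m) y; rewrite setIC; lia.
  rewrite card_gt0 => /set0Pn[e]; rewrite inE => /andP[ex ey].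
  have hw : inX m (y :\ e).
    rewrite /inX; have := cardsD1 e y; rewrite ey hy' => h; apply/orP; left; apply/eqP; lia.
  apply: (connk_snoc (w := y :\ e)); last by rewrite /adjb properD1 ?orbT.
    apply: IH => //; move: hf; rewrite /fpot (card_rem (x0 m) ey) (negbTE ex).
    have := cardsD1 e y; rewrite ey hy'; lia.
  exact: hy.
Qed.

Lemma find_iota_eq (P : pred nat) k L : (k < L)%N -> P k -> (forall j, (j < k)%N -> ~~ P j) ->
  find P (iota 0 L) = k.
Proof.
move=> kL Pk Hj; have -> : L = (k + (L - k))%N by lia.
rewrite iotaD find_cat.
have -> : has P (iota 0 k) = false.
  apply/negbTE/hasPn => j; rewrite mem_iota add0n => /andP[_ lt]; exact: Hj.
have -> : (L - k = (L - k.+1).+1)%N by lia.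
by rewrite size_iota add0n /= Pk addn0.
Qed.

Lemma dist_x0 y : inX m y -> dist m (x0 m) y = fpot y.
Proof.
move=> hy; rewrite /dist; apply: find_iota_eq.
- have : (fpot y <= 2 * m + 1)%N.
    rewrite /fpot; have := cardI_x0 y; case: (inXP hy) => ->; lia.
  move=> h; apply: (leq_ltn_trans h); apply: ltn_expl => //.
- exact: connk_reach.
- move=> j lt; apply/negP => c.
  have hx0 : inX m (x0 m) by rewrite /inX card_x0 eqxx.
  have := @connk_bound j (x0 m) y hx0 c; rewrite fpot_x0; lia.
Qed.

End P2.


Local Open Scope ring_scope.

Section P3.
Variable C : numClosedFieldType.
Variable m : nat.
Local Notation X := (Xt m).
Local Notation T := ('I_(2 * m + 1)).
Local Notation MX := 'M[C]_(#|Xt m|).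

Definition keyT := ((nat * nat) * (nat * nat * nat * nat))%type.
Definition key (y z : X) : keyT := ((#|val y|, #|val z|), rho m (val y) (val z)).

Lemma ent_Imx a b q y z : ent (Imx C m a b q) y z = (key y z == ((a, b), q))%:R.
Proof. by rewrite /Imx entX /key !xpair_eqE andbA. Qed.

Lemma ent_A1 y z : ent (A1 C m) y z = (adjb m (val y) (val z))%:R.
Proof. by rewrite /A1 entX. Qed.

Lemma ent_Estar i y z : ent (Estar C m i) y z = ((y == z) && (fpot (val y) == i))%:R.
Proof. by rewrite /Estar entX dist_x0 //; apply: valP. Qed.

Lemma ent1 y z : ent (1%:M : MX) y z = (y == z)%:R.
Proof. by rewrite /ent mxE (inj_eq enum_rank_inj). Qed.

Definition keyfun (M : MX) := forall y z y' z', key y z = key y' z' -> ent M y z = ent M y' z'.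

Lemma keyfun_add M N : keyfun M -> keyfun N -> keyfun (M + N).
Proof. by move=> hM hN y z y' z' e; rewrite !ent_add (hM _ _ _ _ e) (hN _ _ _ _ e). Qed.
Lemma keyfun_scale a M : keyfun M -> keyfun (a *: M).
Proof. by move=> hM y z y' z' e; rewrite !ent_scale (hM _ _ _ _ e). Qed.
Lemma keyfun0 : keyfun 0.
Proof. by move=> y z y' z' e; rewrite !ent0. Qed.
Lemma keyfun_sum (I : finType) (F : I -> MX) : (forall i, keyfun (F i)) -> keyfun (\sum_i F i).
Proof. move=> H; apply: (big_ind keyfun); [exact: keyfun0 | exact: keyfun_add | by []]. Qed.

Lemma sub_card (A B : {set T}) : (A \subset B) = (#|A :&: B| == #|A|)%N.
Proof.
apply/idP/eqP => [/setIidPl -> // | h].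
by apply/setIidPl/eqP; rewrite eqEcard subsetIl h leqnn.
Qed.

Lemma eq_card3 (y z : X) : (y == z) = [&& #|val y :&: val z| == #|val y| & #|val y :&: val z| == #|val z|]%N.
Proof.
rewrite -val_eqE /= eqEsubset !sub_card setIC; congr (_ && _); by rewrite setIC.
Qed.

Lemma keyfun_A1 : keyfun (A1 C m).
Proof.
move=> y z y' z'; rewrite !ent_A1 /key /rho /adjb !properEcard !sub_card.
case=> e1 e2 e3 e4 e5 e6; rewrite e1 e2 e5 [val z :&: _]setIC [val z' :&: _]setIC e5.
by [].
Qed.

Lemma keyfun_Estar i : keyfun (Estar C m i).
Proof.
move=> y z y' z'; rewrite !ent_Estar !eq_card3 /key /rho /fpot.
by case=> e1 e2 e3 e4 e5 e6; rewrite e1 e2 e3 e5.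
Qed.

Lemma keyfun_1 : keyfun 1%:M.
Proof.
move=> y z y' z'; rewrite !ent1 !eq_card3 /key /rho.
by case=> e1 e2 e3 e4 e5 e6; rewrite e1 e2 e5.
Qed.

Lemma keyfun_Imx a b q : keyfun (Imx C m a b q).
Proof. by move=> y z y' z' e; rewrite !ent_Imx e. Qed.

Local Notation N := (2 * m + 2)%N.
Definition KT := (('I_N * 'I_N) * ('I_N * 'I_N * 'I_N * 'I_N))%type.
Definition nk (k : KT) : keyT :=
  ((val k.1.1, val k.1.2), (val k.2.1.1.1, val k.2.1.1.2, val k.2.1.2, val k.2.2)).
Definition mxK (kk : keyT) : MX := Imx C m kk.1.1 kk.1.2 kk.2.

Definition coef (M : MX) (k : KT) : C :=
  if [pick p : X * X | key p.1 p.2 == nk k] is Some p then ent M p.1 p.2 else 0.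

Lemma nk_inj : injective nk.
Proof.
move=> [[a1 a2] [[[a3 a4] a5] a6]] [[b1 b2] [[[b3 b4] b5] b6]].
move=> e; case: e => e1 e2 e3 e4 e5 e6.
by rewrite (val_inj e1) (val_inj e2) (val_inj e3) (val_inj e4) (val_inj e5) (val_inj e6).
Qed.

Lemma card_ltN (A : {set T}) : (#|A| < N)%N.
Proof. apply: leq_ltn_trans (max_card A) _; rewrite card_ord; lia. Qed.

Lemma key_nk (y z : X) : exists k, key y z = nk k.
Proof.
exists ((Ordinal (card_ltN (val y)), Ordinal (card_ltN (val z))),
        (Ordinal (card_ltN (x0 m :&: val y)), Ordinal (card_ltN (x0 m :&: val z)),
         Ordinal (card_ltN (val y :&: val z)), Ordinal (card_ltN (x0 m :&: val y :&: val z)))).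
by [].
Qed.

Lemma ent_mxK kk y z : ent (mxK kk) y z = (key y z == kk)%:R.
Proof. by rewrite /mxK ent_Imx; case: kk => [[a b] q]. Qed.

Lemma decomp M : keyfun M -> M = \sum_(k : KT) coef M k *: mxK (nk k).
Proof.
move=> hM; apply: mx_ent => y z; rewrite ent_sum.
have [k0 e0] := key_nk y z.
rewrite (bigD1 k0) //= big1 ?addr0 => [|k nk0].
  rewrite ent_scale ent_mxK e0 eqxx mulr1 /coef.
  case: pickP => [p /eqP hp | /(_ (y, z)) /=]; last by rewrite e0 eqxx.
  by apply: hM; rewrite hp e0.
rewrite ent_scale ent_mxK e0; case: eqP => [/nk_inj e|]; last by rewrite mulr0.
by rewrite e eqxx in nk0.
Qed.

End P3.


Section Bij.
Variables (T' : finType) (K : eqType).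

Lemma ex_inj_map (f f' : T' -> K) n : forall A B : {set T'}, #|A| = n ->
  (forall c, #|[set e in A | f e == c]| = #|[set e in B | f' e == c]|) ->
  exists g : T' -> T', {in A &, injective g} /\ {in A, forall e, g e \in B /\ f' (g e) = f e}.
Proof.
elim: n => [|n IH] A B hA hc.
  exists id; split => [x y|x]; by move/eqP: hA; rewrite cards_eq0 => /eqP ->; rewrite inE.
have : (0 < #|A|)%N by rewrite hA.
rewrite card_gt0 => /set0Pn[a aA].
have : (0 < #|[set e in B | f' e == f a]|)%N.
  by rewrite -hc card_gt0; apply/set0Pn; exists a; rewrite !inE aA eqxx.
rewrite card_gt0 => /set0Pn[b]; rewrite !inE => /andP[bB /eqP fb].
have hA' : #|A :\ a| = n by move: hA; rewrite (cardsD1 a) aA add1n => -[].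
have hc' : forall c, #|[set e in A :\ a | f e == c]| = #|[set e in B :\ b | f' e == c]|.
  move=> c; have := hc c.
  rewrite (cardsD1 a [set e in A | f e == c]) (cardsD1 b [set e in B | f' e == c]).
  rewrite !inE aA bB fb /= => h.
  have e1 : [set e in A | f e == c] :\ a = [set e in A :\ a | f e == c].
    by apply/setP => x; rewrite !inE andbA.
  have e2 : [set e in B | f' e == c] :\ b = [set e in B :\ b | f' e == c].
    by apply/setP => x; rewrite !inE andbA.
  by rewrite -e1 -e2; lia.
have [g [ginj gmap]] := IH _ _ hA' hc'.
exists (fun e => if e == a then b else g e); split.
  move=> x y xA yA /=.
  case: (eqVneq x a) => [->|xa]; case: (eqVneq y a) => [->|ya] //.
  - move=> eb; have := gmap y; rewrite !inE ya yA => /(_ isT) [/andP[]].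
    by rewrite -eb eqxx.
  - move=> eb; have := gmap x; rewrite !inE xa xA => /(_ isT) [/andP[]].
    by rewrite eb eqxx.
  - by apply: ginj; rewrite !inE ?xa ?ya ?xA ?yA.
move=> x xA /=; case: (eqVneq x a) => [->|xa]; first by rewrite bB fb.
have := gmap x; rewrite !inE xa xA => /(_ isT) [].
by move=> /andP[_ ->] ->.
Qed.

Lemma ex_perm (f f' : T' -> K) :
  (forall c, #|[set e | f e == c]| = #|[set e | f' e == c]|) ->
  exists g : T' -> T', injective g /\ forall e, f' (g e) = f e.
Proof.
move=> hc.
have hc' : forall c, #|[set e in [set: T'] | f e == c]| = #|[set e in [set: T'] | f' e == c]|.
  move=> c; have := hc c.
  have -> : [set e in [set: T'] | f e == c] = [set e | f e == c] by apply/setP => x; rewrite !inE.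
  by have -> : [set e in [set: T'] | f' e == c] = [set e | f' e == c] by apply/setP => x; rewrite !inE.
have [g [ginj gmap]] := ex_inj_map (erefl #|[set: T']|) hc'.
have gi : injective g by move=> x y; apply: ginj; rewrite inE.
exists g; split => //; move=> e; by have [_ ->] := gmap e (in_setT e).
Qed.
Definition lit (b : bool) (A : {set T'}) := if b then A else ~: A.

Lemma L1 b (A A' S S' : {set T'}) : #|S| = #|S'| -> #|A :&: S| = #|A' :&: S'| ->
  #|lit b A :&: S| = #|lit b A' :&: S'|.
Proof.
case: b => //= h1 h2.
have := cardsID A S; have := cardsID A' S'.
rewrite !setDE ![_ :&: A]setIC ![_ :&: A']setIC ![S :&: _]setIC ![S' :&: _]setIC.
move=> a b; apply/eqP; rewrite -(eqn_add2l #|A :&: S|) b h2 a h1. by apply/eqP. Qed.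

Lemma atoms (X1 Y1 Z1 X2 Y2 Z2 : {set T'}) :
  #|X1| = #|X2| -> #|Y1| = #|Y2| -> #|Z1| = #|Z2| ->
  #|X1 :&: Y1| = #|X2 :&: Y2| -> #|X1 :&: Z1| = #|X2 :&: Z2| -> #|Y1 :&: Z1| = #|Y2 :&: Z2| ->
  #|X1 :&: Y1 :&: Z1| = #|X2 :&: Y2 :&: Z2| ->
  forall b1 b2 b3, #|lit b1 X1 :&: (lit b2 Y1 :&: lit b3 Z1)| = #|lit b1 X2 :&: (lit b2 Y2 :&: lit b3 Z2)|.
Proof.
move=> hX hY hZ hXY hXZ hYZ hXYZ b1 b2 b3.
have ha : #|lit b3 Z1| = #|lit b3 Z2|.
  rewrite -(setIT (lit b3 Z1)) -(setIT (lit b3 Z2)); apply: L1; by rewrite ?setIT.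
have hb : #|lit b3 Z1 :&: Y1| = #|lit b3 Z2 :&: Y2|.
  by apply: L1; rewrite // setIC hYZ setIC.
have hc : #|lit b2 Y1 :&: lit b3 Z1| = #|lit b2 Y2 :&: lit b3 Z2|.
  by apply: L1; rewrite // setIC hb setIC.
have hd1 : #|lit b3 Z1 :&: X1| = #|lit b3 Z2 :&: X2|.
  by apply: L1; rewrite // setIC hXZ setIC.
have hd2 : #|lit b3 Z1 :&: (Y1 :&: X1)| = #|lit b3 Z2 :&: (Y2 :&: X2)|.
  apply: L1; first by rewrite setIC hXY setIC.
  have e : forall (A B D : {set T'}), D :&: (B :&: A) = A :&: B :&: D.
    by move=> A B D; rewrite setIC (setIC B).
  by rewrite !e.
have hd : #|X1 :&: (lit b2 Y1 :&: lit b3 Z1)| = #|X2 :&: (lit b2 Y2 :&: lit b3 Z2)|.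
  rewrite (setICA X1) (setICA X2); apply: L1.
  - by rewrite (setIC X1) (setIC X2).
  - by rewrite (setIC X1) (setIC X2) (setICA Y1) (setICA Y2).
by apply: L1.
Qed.

Lemma fiber (Y1 Y2 Y3 : {set T'}) b1 b2 b3 :
  [set e | (e \in Y1, e \in Y2, e \in Y3) == (b1, b2, b3)] = lit b1 Y1 :&: (lit b2 Y2 :&: lit b3 Y3).
Proof.
apply/setP => e; rewrite !inE !xpair_eqE.
by case: b1; case: b2; case: b3; rewrite /lit ?inE ?eqb_id ?eqbF_neg -andbA.
Qed.

End Bij.

Section P4.
Variable C : numClosedFieldType.
Variable m : nat.
Local Notation X := (Xt m).
Local Notation T := ('I_(2 * m + 1)).
Local Notation MX := 'M[C]_(#|Xt m|).

Lemma transport (y z y' z' : X) : key y z = key y' z' ->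
  exists h : T -> T, injective h /\ h @^-1: x0 m = x0 m /\ h @^-1: val y = val y' /\ h @^-1: val z = val z'.
Proof.
rewrite /key /rho => -[e1 e2 e3 e4 e5 e6].
pose f e := (e \in x0 m, e \in val y, e \in val z).
pose f' e := (e \in x0 m, e \in val y', e \in val z').
have hc : forall c, #|[set e | f e == c]| = #|[set e | f' e == c]|.
  move=> [[b1 b2] b3]; rewrite /f /f' !fiber; apply: atoms => //.
have [g [gi hg]] := ex_perm hc.
exists (invF gi); split; first exact: (can_inj (f_invF gi)).
have key_e : forall e, f' e = f (invF gi e) by move=> e; rewrite -hg f_invF.
split; [|split]; apply/setP => e; have := key_e e; rewrite /f /f';
  by case=> E1 E2 E3; rewrite ?E1 ?E2 ?E3 !inE.
Qed.

Section Phi.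
Variable h : T -> T.
Hypothesis hinj : injective h.
Hypothesis hx0 : h @^-1: x0 m = x0 m.

Lemma inX_pre (w : X) : inX m (h @^-1: val w).
Proof. by rewrite /inX (card_preimset _ hinj); exact: (valP w). Qed.

Definition Phi (w : X) : X := Sub (h @^-1: val w) (inX_pre w).

Lemma key_Phi a b : key (Phi a) (Phi b) = key a b.
Proof.
by rewrite /key /rho /Phi /= -[in LHS]hx0 -!preimsetI !(card_preimset _ hinj).
Qed.
End Phi.

Lemma keyfun_mul (M N : MX) : keyfun M -> keyfun N -> keyfun (M *m N).
Proof.
move=> hM hN y z y' z' e.
have [h [hinj [hx0 [hy hz]]]] := transport e.
have hbij : bijective (Phi hinj).
  have hsurj : forall e, h (invF hinj e) = e by move=> x; rewrite f_invF.
  have ginj : injective (invF hinj) by apply: can_inj (f_invF hinj).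
  exists (Phi ginj) => w; apply: val_inj; apply/setP => x; rewrite /Phi /= !inE.
    by rewrite f_invF.
  by rewrite invF_f.
rewrite !ent_mul [RHS](reindex (Phi hinj)) /=; last by apply: onW_bij.
apply: eq_bigr => w _.
have Py : Phi hinj y = y' by apply: val_inj; rewrite /= hy.
have Pz : Phi hinj z = z' by apply: val_inj; rewrite /= hz.
rewrite -Py -Pz (hM _ _ _ _ (key_Phi hinj hx0 y w)) (hN _ _ _ _ (key_Phi hinj hx0 w z)).
by [].
Qed.

End P4.


Section Gen1.
Variable T : finType.
Implicit Types A y z : {set T}.

Lemma pick_diff A y z : (#|A :&: y :&: z| < #|A :&: z|)%N ->
  exists e, [/\ e \in A, e \in z & e \notin y].
Proof.
have := cardsID y (A :&: z); rewrite setIAC => h lt.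
have : (0 < #|A :&: z :\: y|)%N by lia.
rewrite card_gt0 => /set0Pn[e]; rewrite !inE => /andP[ey /andP[eA ez]].
by exists e; rewrite eA ez ey.
Qed.

Lemma no_diff A y z e : (#|A :&: z| <= #|A :&: y :&: z|)%N -> e \in z -> e \notin y -> e \notin A.
Proof.
move=> le ez ey; apply/negP => eA.
have := cardsID y (A :&: z); rewrite setIAC => h.
have : (0 < #|A :&: z :\: y|)%N by rewrite card_gt0; apply/set0Pn; exists e; rewrite !inE ey eA ez.
lia.
Qed.

Lemma cardC_I A y : #|~: A :&: y| = (#|y| - #|A :&: y|)%N.
Proof. by have := cardsID A y; rewrite setDE setIC (setIC y); lia. Qed.
End Gen1.

Section P5.
Variable C : numClosedFieldType.
Variable m : nat.
Local Notation X := (Xt m).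
Local Notation T := ('I_(2 * m + 1)).
Local Notation MX := 'M[C]_(#|Xt m|).

Lemma cardXt (y : X) : #|val y| = m \/ #|val y| = m.+1.
Proof. exact: (inXP (valP y)). Qed.

Lemma fpot_le (y : X) : (fpot (val y) < 2 * m + 2)%N.
Proof. rewrite /fpot; have := cardI_x0 (val y); case: (cardXt y) => ->; lia. Qed.

Lemma fpot_eq (y y' : X) : fpot (val y) = fpot (val y') ->
  #|val y| = #|val y'| /\ #|x0 m :&: val y| = #|x0 m :&: val y'|.
Proof.
rewrite /fpot; have := cardI_x0 (val y); have := cardI_x0 (val y').
by case: (cardXt y) => ->; case: (cardXt y') => ->; lia.
Qed.

Lemma ent_EstarM i (M : MX) y z :
  ent (Estar C m i *m M) y z = (fpot (val y) == i)%:R * ent M y z.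
Proof.
rewrite ent_mul (bigD1 y) //= big1 ?addr0 => [|w wy]; first by rewrite ent_Estar eqxx.
by rewrite ent_Estar eq_sym (negbTE wy) mul0r.
Qed.

Lemma sum_neq0 (F : X -> C) : \sum_w F w != 0 -> exists w, F w != 0.
Proof.
move=> h; case: (pickP (fun w => F w != 0)) => [w hw|hn]; first by exists w.
move/eqP: h; case; apply: big1 => w _; by have := hn w => /negbFE/eqP.
Qed.

Lemma sum_gt0 (F : X -> C) w0 : (forall w, 0 <= F w) -> 0 < F w0 -> 0 < \sum_w F w.
Proof.
move=> h0 h; rewrite (bigD1 w0) //=; apply: ltr_wpDr => //.
by apply: sumr_ge0 => w _.
Qed.

Definition supp (Pi : MX) (y0 z0 : X) :=
  forall y z, ent Pi y z != 0 -> [/\ fpot (val y) = fpot (val y0), fpot (val z) = fpot (val z0),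
     (#|x0 m :&: val y0 :&: val z0| <= #|x0 m :&: val y :&: val z|)%N &
     (#|~: x0 m :&: val y0 :&: val z0| <= #|~: x0 m :&: val y :&: val z|)%N].

Definition good (Pi : MX) (y0 z0 : X) :=
  [/\ inT C m Pi, (forall y z, 0 <= ent Pi y z),
      (forall y z, key y z = key y0 z0 -> 0 < ent Pi y z) & supp Pi y0 z0].

Lemma fpot_A (A : {set T}) (y y0 : X) : (A = x0 m \/ A = ~: x0 m) ->
  fpot (val y) = fpot (val y0) -> #|A :&: val y| = #|A :&: val y0|.
Proof.
move=> hA /fpot_eq [h1 h2]; case: hA => ->; rewrite ?cardC_I; lia.
Qed.

Lemma gen_base (y0 : X) : good (Estar C m (fpot (val y0))) y0 y0.
Proof.
split.
- by apply: inT_Estar; apply: fpot_le.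
- by move=> y z; rewrite ent_Estar ler0n.
- move=> y z; rewrite /key /rho => -[e1 e2 e3 e4 e5 e6].
  have yz : y == z by rewrite eq_card3 e5 e1 e2 setIid !eqxx.
  rewrite ent_Estar yz /= /fpot e1 e3 eqxx ltr0n //.
- move=> y z; rewrite ent_Estar; case: (boolP (y == z)) => [/eqP <-|_]; last by rewrite /= eqxx.
  case: (boolP (fpot (val y) == fpot (val y0))) => [/eqP ef _|_]; last by rewrite /= eqxx.
  split => //; rewrite -!setIA !setIid.
    by rewrite (fpot_A (or_introl erefl) ef).
  by rewrite (fpot_A (or_intror erefl) ef).
Qed.

Lemma key_up (y z w : X) e : val w = e |: val y -> e \notin val y -> e \in val z ->
  key w z = ((#|val y|.+1, #|val z|),
     (#|x0 m :&: val y| + (e \in x0 m), #|x0 m :&: val z|, #|val y :&: val z|.+1,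
      #|x0 m :&: val y :&: val z| + (e \in x0 m)))%N.
Proof.
move=> hw ey ez; rewrite /key /rho hw cardsU1 ey card_ins //.
have e1 : #|(e |: val y) :&: val z| = #|val y :&: val z|.+1.
  by rewrite setIC card_ins // ez setIC.
have e2 : #|x0 m :&: (e |: val y) :&: val z| = (#|x0 m :&: val y :&: val z| + (e \in x0 m))%N.
  rewrite setIAC card_ins // inE ez andbT setIAC; lia.
by rewrite e1 e2 (addnC (e \in x0 m)).
Qed.

Lemma key_down (y z w : X) e : val w = val y :\ e -> e \in val y -> e \notin val z ->
  key w z = ((#|val y|.-1, #|val z|),
     (#|x0 m :&: val y| - (e \in x0 m), #|x0 m :&: val z|, #|val y :&: val z|,
      #|x0 m :&: val y :&: val z|))%N.
Proof.
move=> hw ey ez; rewrite /key /rho hw.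
have e0 : #|val y :\ e| = #|val y|.-1 by rewrite (cardsD1 e (val y)) ey.
have e1 : #|x0 m :&: (val y :\ e)| = (#|x0 m :&: val y| - (e \in x0 m))%N.
  by rewrite (card_rem (x0 m) ey) addKn.
have e2 : #|(val y :\ e) :&: val z| = #|val y :&: val z|.
  by rewrite setIC [in RHS]setIC (card_rem (val z) ey) (negbTE ez).
have e3 : #|x0 m :&: (val y :\ e) :&: val z| = #|x0 m :&: val y :&: val z|.
  by rewrite setIAC [in RHS]setIAC (card_rem (x0 m :&: val z) ey) inE (negbTE ez) andbF.
by rewrite e0 e1 e2 e3.
Qed.


Lemma up_supp (A0 : {set T}) (y z w y0 z0 w0 : X) e0 :
  val w0 = e0 |: val y0 -> e0 \notin val y0 -> e0 \in val z0 -> val y \subset val w ->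
  #|A0 :&: val w| = #|A0 :&: val w0| -> #|A0 :&: val y| = #|A0 :&: val y0| ->
  (#|A0 :&: val w0 :&: val z0| <= #|A0 :&: val w :&: val z|)%N ->
  (#|A0 :&: val y0 :&: val z0| <= #|A0 :&: val y :&: val z|)%N.
Proof.
move=> hw0 ey ez syw h1 h2 h3.
have st := card_sub_step (subsetIl A0 (val z)) syw.
rewrite -!setIA !(setIC (val z)) !setIA in st.
have c1 := card_ins A0 ey.
have c2 := card_ins (A0 :&: val z0) ey.
rewrite !inE ez andbT setIAC [A0 :&: val z0 :&: _]setIAC in c2.
rewrite hw0 in h1 h3.
move: st c1 c2 h1 h2 h3; move: (e0 \in A0 : nat) => d.
lia.
Qed.

Lemma down_supp (A0 : {set T}) (y z w y0 z0 w0 : X) e0 :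
  val w0 = val y0 :\ e0 -> e0 \in val y0 -> e0 \notin val z0 -> val w \subset val y ->
  (#|A0 :&: val w0 :&: val z0| <= #|A0 :&: val w :&: val z|)%N ->
  (#|A0 :&: val y0 :&: val z0| <= #|A0 :&: val y :&: val z|)%N.
Proof.
move=> hw0 ey ez swy h3.
have c2 := card_rem (A0 :&: val z0) ey.
rewrite !inE (negbTE ez) andbF add0n in c2.
have sub : A0 :&: val w :&: val z \subset A0 :&: val y :&: val z.
  by apply: setSI; apply: setIS.
rewrite hw0 in h3; rewrite (setIAC A0 (val y0)) c2 (setIAC A0 (val z0)).
have := subset_leq_card sub; lia.
Qed.

Lemma pick_up (y z : X) : #|val y| = m -> (#|val y :&: val z| < #|val z|)%N ->
  exists e, [/\ e \in val z, e \notin val y &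
     (e \in x0 m) = (#|x0 m :&: val y :&: val z| < #|x0 m :&: val z|)%N].
Proof.
move=> hy lt; case: (boolP (#|x0 m :&: val y :&: val z| < #|x0 m :&: val z|)%N) => h.
  by have [e [eA ez ey]] := pick_diff h; exists e; rewrite eA.
have h' : (#|[set: T] :&: val y :&: val z| < #|[set: T] :&: val z|)%N by rewrite !setTI.
have [e [_ ez ey]] := pick_diff h'; exists e; split => //.
by apply/negbTE; apply: no_diff ez ey; rewrite leqNgt.
Qed.

Lemma pick_down (y z : X) : #|val y| = m.+1 -> (#|val y :&: val z| < #|val y|)%N ->
  exists e, [/\ e \in val y, e \notin val z &
     (e \in x0 m) = (#|x0 m :&: val y :&: val z| < #|x0 m :&: val y|)%N].
Proof.
move=> hy lt; rewrite setIAC.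
case: (boolP (#|x0 m :&: val z :&: val y| < #|x0 m :&: val y|)%N) => h.
  by have [e [eA ez ey]] := pick_diff h; exists e; rewrite eA.
have h' : (#|[set: T] :&: val z :&: val y| < #|[set: T] :&: val y|)%N by rewrite !setTI setIC.
have [e [_ ez ey]] := pick_diff h'; exists e; split => //.
by apply/negbTE; apply: no_diff ez ey; rewrite leqNgt.
Qed.

Lemma fpot_key (y z y0 z0 : X) : key y z = key y0 z0 -> fpot (val y) = fpot (val y0).
Proof. by rewrite /key /rho /fpot => -[-> _ -> _ _ _]. Qed.

Lemma good_step (y0 z0 w0 : X) (Pi' : MX) :
  good Pi' w0 z0 ->
  (forall y z, key y z = key y0 z0 -> exists w : X, adjb m (val y) (val w) /\ key w z = key w0 z0) ->
  (forall (y z w : X), fpot (val y) = fpot (val y0) -> adjb m (val y) (val w) ->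
      fpot (val w) = fpot (val w0) -> fpot (val z) = fpot (val z0) ->
      (#|x0 m :&: val w0 :&: val z0| <= #|x0 m :&: val w :&: val z|)%N ->
      (#|~: x0 m :&: val w0 :&: val z0| <= #|~: x0 m :&: val w :&: val z|)%N ->
      (#|x0 m :&: val y0 :&: val z0| <= #|x0 m :&: val y :&: val z|)%N /\
      (#|~: x0 m :&: val y0 :&: val z0| <= #|~: x0 m :&: val y :&: val z|)%N) ->
  good (Estar C m (fpot (val y0)) *m (A1 C m *m Pi')) y0 z0.
Proof.
move=> [hT hnn hpos hsupp] hmove hs.
split.
- by apply: inT_mul; [apply: inT_Estar; apply: fpot_le | apply: inT_mul => //; apply: inT_A1].
- move=> y z; rewrite ent_EstarM ent_mul; apply: mulr_ge0; first by rewrite ler0n.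
  by apply: sumr_ge0 => w _; apply: mulr_ge0; [rewrite ent_A1 ler0n | apply: hnn].
- move=> y z hk; rewrite ent_EstarM (fpot_key hk) eqxx mul1r ent_mul.
  have [w [adj kw]] := hmove y z hk.
  apply: (sum_gt0 (w0 := w)).
    by move=> u; apply: mulr_ge0; [rewrite ent_A1 ler0n | apply: hnn].
  by rewrite ent_A1 adj mul1r; apply: hpos.
- move=> y z; rewrite ent_EstarM ent_mul.
  case: (boolP (fpot (val y) == fpot (val y0))) => [/eqP ef|_]; last by rewrite mul0r eqxx.
  rewrite mul1r => /sum_neq0 [w]; rewrite mulf_eq0 negb_or => /andP[ha hp].
  have adj : adjb m (val y) (val w) by move: ha; rewrite ent_A1; case: (adjb _ _ _) => //; rewrite eqxx.
  have [ew ez i1 i2] := hsupp w z hp.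
  by have [j1 j2] := hs y z w ef adj ew ez i1 i2.
Qed.

Lemma ar_up (a t z n : nat) : (a - t + (z - t) = n.+1 -> t < z -> a.+1 - t.+1 + (z - t.+1) = n)%N.
Proof. lia. Qed.
Lemma ar_down (a t z n : nat) : (a - t + (z - t) = n.+1 -> t < a -> a.-1 - t + (z - t) = n)%N.
Proof. lia. Qed.
Lemma ar0a (a t z : nat) : (a - t + (z - t) = 0 -> t <= a -> t = a)%N.
Proof. lia. Qed.
Lemma ar0b (a t z : nat) : (a - t + (z - t) = 0 -> t <= z -> t = z)%N.
Proof. lia. Qed.
Lemma ar_lt_up (a t z n : nat) : (a - t + (z - t) = n.+1 -> a <= z -> t < z)%N.
Proof. lia. Qed.
Lemma ar_lt_down (a t z n : nat) : (a - t + (z - t) = n.+1 -> z <= a -> t < a)%N.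
Proof. lia. Qed.

Lemma ar_c (a b : nat) : (a.+1 = true + b -> (b == a) = true)%N.
Proof. move=> h; apply/eqP; lia. Qed.

Lemma ar_d (a b : nat) : (a.+1 = true + b -> a.+1 < b -> False)%N.
Proof. lia. Qed.

Lemma gen n : forall y0 z0 : X,
  ((#|val y0| - #|val y0 :&: val z0|) + (#|val z0| - #|val y0 :&: val z0|))%N = n ->
  exists Pi, good Pi y0 z0.
Proof.
elim: n => [|n IH] y0 z0 hn.
  have t1 : (#|val y0 :&: val z0| <= #|val y0|)%N by apply: subset_leq_card; apply: subsetIl.
  have t2 : (#|val y0 :&: val z0| <= #|val z0|)%N by apply: subset_leq_card; apply: subsetIr.
  have s1 : val y0 \subset val z0 by rewrite sub_card; apply/eqP; exact: ar0a hn t1.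
  have s2 : val z0 \subset val y0 by rewrite sub_card setIC; apply/eqP; exact: ar0b hn t2.
  have e : y0 = z0 by apply: val_inj; apply/eqP; rewrite eqEsubset s1 s2.
  by subst; exists (Estar C m (fpot (val z0))); apply: gen_base.
have t1 : (#|val y0 :&: val z0| <= #|val y0|)%N by apply: subset_leq_card; apply: subsetIl.
have t2 : (#|val y0 :&: val z0| <= #|val z0|)%N by apply: subset_leq_card; apply: subsetIr.
case: (cardXt y0) => hy0.
-
  have az : (#|val y0| <= #|val z0|)%N by rewrite hy0; case: (cardXt z0) => ->.
  have lt : (#|val y0 :&: val z0| < #|val z0|)%N by exact: ar_lt_up hn az.
  have [e0 [e0z e0y be0]] := pick_up hy0 lt.
  have iw0 : inX m (e0 |: val y0) by rewrite /inX cardsU1 e0y hy0 eqxx orbT.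
  pose w0 : X := Sub (e0 |: val y0) iw0.
  have hw0 : val w0 = e0 |: val y0 by [].
  have k0 := key_up hw0 e0y e0z.
  have [Pi' gP] : exists Pi, good Pi w0 z0.
    apply: IH; move: k0; rewrite /key /rho; case=> a _ b _; rewrite a b; exact: ar_up hn lt.
  exists (Estar C m (fpot (val y0)) *m (A1 C m *m Pi')); apply: good_step gP _ _.
    move=> y z hk.
    have [hy lt'] : #|val y| = m /\ (#|val y :&: val z| < #|val z|)%N.
      by move: hk; rewrite /key /rho => -[-> -> _ _ -> _].
    have [e [ez ey be]] := pick_up hy lt'.
    have iw : inX m (e |: val y) by rewrite /inX cardsU1 ey hy eqxx orbT.
    exists (Sub (e |: val y) iw); split.
      by rewrite /adjb properUr ?orbT // sub1set.
    rewrite (key_up (w := Sub (e |: val y) iw) _ ey ez) // k0 be be0.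
    by move: hk; rewrite /key /rho => -[-> -> -> -> -> ->].
  move=> y z w ef adj ew ez i1 i2.
  have [hy _] := fpot_eq ef.
  have [hw _] := fpot_eq ew.
  have syw : val y \subset val w.
    move: adj; rewrite /adjb => /orP[/proper_sub //|pr].
    have hy0s : #|sval y0| = m := hy0.
    by have := proper_card pr; rewrite hw hy hy0 /= cardsU1 e0y hy0s; lia.
  split.
    apply: (up_supp hw0 e0y e0z syw) => //; exact: (fpot_A (or_introl erefl)).
  apply: (up_supp hw0 e0y e0z syw) => //; exact: (fpot_A (or_intror erefl)).
-
  have az : (#|val z0| <= #|val y0|)%N by rewrite hy0; case: (cardXt z0) => ->.
  have lt : (#|val y0 :&: val z0| < #|val y0|)%N by exact: ar_lt_down hn az.
  have [e0 [e0y e0z be0]] := pick_down hy0 lt.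
  have iw0 : inX m (val y0 :\ e0).
    by rewrite /inX; have := cardsD1 e0 (val y0); rewrite e0y hy0 => h; apply/orP; left; exact: ar_c h.
  pose w0 : X := Sub (val y0 :\ e0) iw0.
  have hw0 : val w0 = val y0 :\ e0 by [].
  have k0 := key_down hw0 e0y e0z.
  have [Pi' gP] : exists Pi, good Pi w0 z0.
    apply: IH; move: k0; rewrite /key /rho; case=> a _ b _; rewrite a b; exact: ar_down hn lt.
  exists (Estar C m (fpot (val y0)) *m (A1 C m *m Pi')); apply: good_step gP _ _.
    move=> y z hk.
    have [hy lt'] : #|val y| = m.+1 /\ (#|val y :&: val z| < #|val y|)%N.
      by move: hk; rewrite /key /rho => -[-> _ _ _ -> _].
    have [e [ey ez be]] := pick_down hy lt'.
    have iw : inX m (val y :\ e).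
      by rewrite /inX; have := cardsD1 e (val y); rewrite ey hy => h; apply/orP; left; exact: ar_c h.
    exists (Sub (val y :\ e) iw); split.
      by rewrite /adjb properD1 ?orbT.
    rewrite (key_down (w := Sub (val y :\ e) iw) _ ey ez) // k0 be be0.
    by move: hk; rewrite /key /rho => -[-> -> -> -> -> ->].
  move=> y z w ef adj ew ez i1 i2.
  have [hy _] := fpot_eq ef.
  have [hw _] := fpot_eq ew.
  have swy : val w \subset val y.
    move: adj; rewrite /adjb => /orP[pr|/proper_sub //].
    have := proper_card pr; rewrite hw hy hy0 /= => lt'.
    have c := cardsD1 e0 (val y0); rewrite e0y hy0 in c.
    by exfalso; exact: (ar_d c lt').
  split.
    exact: (down_supp hw0 e0y e0z swy).
  exact: (down_supp hw0 e0y e0z swy).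
Qed.

End P5.


Section Uniq.
Lemma uniq_flatten_map (A B : eqType) (s : seq A) (f : A -> seq B) (g : B -> A) :
  uniq s -> (forall x, x \in s -> uniq (f x)) -> (forall x y, y \in f x -> g y = x) ->
  uniq (flatten (map f s)).
Proof.
elim: s => [|a s IH] //= /andP[nas us] hu hg.
rewrite cat_uniq hu ?mem_head // IH // => [|x xs]; last by apply: hu; rewrite inE xs orbT.
rewrite andbT; apply/hasPn => y /flatten_mapP[x xs yx]; apply/negP => ya.
by move: nas; rewrite -(hg _ _ ya) (hg _ _ yx) xs.
Qed.

Variable n : nat.
Definition QL3 (a b c : nat) : seq (nat * nat * nat * nat) := [seq (a, b, c, d) | d <- iota 0 n].
Definition QL2 (a b : nat) := flatten [seq QL3 a b c | c <- iota 0 n].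
Definition QL1 (a : nat) := flatten [seq QL2 a b | b <- iota 0 n].

Lemma quadsE : quads n = flatten [seq QL1 a | a <- iota 0 n].
Proof. by []. Qed.

Lemma memQL3 a b c y : y \in QL3 a b c -> [/\ y.1.1.1 = a, y.1.1.2 = b & y.1.2 = c].
Proof. by case/mapP => d _ ->. Qed.
Lemma memQL2 a b y : y \in QL2 a b -> y.1.1.1 = a /\ y.1.1.2 = b.
Proof. by case/flatten_mapP => c _ /memQL3 []. Qed.
Lemma memQL1 a y : y \in QL1 a -> y.1.1.1 = a.
Proof. by case/flatten_mapP => b _ /memQL2 []. Qed.

Lemma uniq_quads : uniq (quads n).
Proof.
rewrite quadsE; apply: (uniq_flatten_map (g := fun y => y.1.1.1)) => [||x y /memQL1 //].
  exact: iota_uniq.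
move=> a _; apply: (uniq_flatten_map (g := fun y => y.1.1.2)) => [||x y /memQL2 [] //].
  exact: iota_uniq.
move=> b _; apply: (uniq_flatten_map (g := fun y => y.1.2)) => [||x y /memQL3 [] //].
  exact: iota_uniq.
move=> c _; rewrite map_inj_uniq ?iota_uniq // => d1 d2 [] //.
Qed.

Lemma mem_quads (q : nat * nat * nat * nat) :
  (q.1.1.1 < n)%N -> (q.1.1.2 < n)%N -> (q.1.2 < n)%N -> (q.2 < n)%N -> q \in quads n.
Proof.
case: q => [[[a b] c] d] /= ha hb hc hd; rewrite quadsE.
apply/flatten_mapP; exists a; first by rewrite mem_iota.
apply/flatten_mapP; exists b; first by rewrite mem_iota.
apply/flatten_mapP; exists c; first by rewrite mem_iota.
by apply/mapP; exists d; rewrite ?mem_iota.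
Qed.
End Uniq.

Section P6.
Variable C : numClosedFieldType.
Variable m : nat.
Local Notation X := (Xt m).
Local Notation T := ('I_(2 * m + 1)).
Local Notation MX := 'M[C]_(#|Xt m|).

Lemma keyfun_word w : keyfun (wordmx C m w).
Proof.
elim: w => [|g w IH] /=; first exact: keyfun_1.
apply: keyfun_mul => //; case: g => [i|] /=; [exact: keyfun_Estar | exact: keyfun_A1].
Qed.

Lemma keyfun_inT M : inT C m M -> keyfun M.
Proof.
move=> [s [c ->]]; apply: keyfun_sum => i; apply: keyfun_scale; exact: keyfun_word.
Qed.

Lemma ar_key (a p q a0 p0 q0 : nat) : (a = p + q -> a0 = p0 + q0 -> a <= a0 -> p0 <= p -> q0 <= q -> p = p0 /\ q = q0)%N.
Proof. lia. Qed.
Lemma ar_meas (t t0 d N : nat) : (N - t0 <= d.+1 -> t0 < t -> t < N -> N - t <= d)%N.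
Proof. lia. Qed.

Lemma split_int (A y z : {set T}) : #|y :&: z| = (#|A :&: y :&: z| + #|~: A :&: y :&: z|)%N.
Proof. by rewrite -!setIA cardC_I; have := subset_leq_card (subsetIr A (y :&: z)); lia. Qed.

Lemma mxK_inT_aux d : forall y0 z0 : X, (2 * m + 2 - #|val y0 :&: val z0| <= d)%N ->
  inT C m (mxK C m (key y0 z0)).
Proof.
elim: d => [|d IH] y0 z0 hd.
  by exfalso; have := card_ltN (val y0 :&: val z0); lia.
have [Pi [hT hnn hpos hsupp]] := @gen C m _ y0 z0 (erefl _).
pose c := ent Pi y0 z0.
have cpos : 0 < c by apply: hpos.
pose M := Pi - c *: mxK C m (key y0 z0).
have kM : keyfun M.
  apply: keyfun_add; first exact: keyfun_inT.
  rewrite -scaleN1r; apply: keyfun_scale; apply: keyfun_scale; exact: keyfun_Imx.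
have TM : inT C m M.
  rewrite (decomp kM); apply: inT_sum => k.
  case: (eqVneq (coef M k) 0) => [->|]; first by rewrite scale0r; exact: inT0.
  rewrite /coef; case: pickP => [[y z] /= /eqP hk|]; last by rewrite eqxx.
  move=> hM; apply: inT_scale; rewrite -hk.
  have hMe : ent M y z = ent Pi y z - c * (key y z == key y0 z0)%:R.
    by rewrite /M ent_add ent_opp ent_scale ent_mxK.
  case: (eqVneq (key y z) (key y0 z0)) => [e|ne].
    by move: hM; rewrite hMe e eqxx mulr1 /c (keyfun_inT hT e) subrr eqxx.
  have hPi : ent Pi y z != 0 by move: hM; rewrite hMe (negbTE ne) mulr0 subr0.
  have [f1 f2 i1 i2] := hsupp y z hPi.
  have [a1 a2] := fpot_eq f1.
  have [b1 b2] := fpot_eq f2.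
  case: (ltnP #|val y0 :&: val z0| #|val y :&: val z|) => lt.
    apply: IH; apply: (ar_meas hd lt); exact: card_ltN.
  have [p1 p2] := ar_key (split_int (x0 m) (val y) (val z)) (split_int (x0 m) (val y0) (val z0)) lt i1 i2.
  have ee : key y z = key y0 z0.
    rewrite /key /rho a1 a2 b1 b2 p1.
    by rewrite (split_int (x0 m) (val y) (val z)) (split_int (x0 m) (val y0) (val z0)) p1 p2.
  by rewrite ee eqxx in ne.
have -> : mxK C m (key y0 z0) = c^-1 *: (Pi - M).
  by rewrite /M opprD opprK addrA subrr add0r scalerA mulVf ?scale1r // lt0r_neq0.
by apply: inT_scale; apply: inT_add => //; apply: inT_opp.
Qed.

Lemma mxK_inT (y0 z0 : X) : inT C m (mxK C m (key y0 z0)).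
Proof. by apply: (@mxK_inT_aux (2 * m + 2)); rewrite leq_subr. Qed.

End P6.


Section P7.
Variable C : numClosedFieldType.
Variable m : nat.
Local Notation X := (Xt m).
Local Notation T := ('I_(2 * m + 1)).
Local Notation MX := 'M[C]_(#|Xt m|).

Definition pairs : seq (nat * nat) := [:: (m, m); (m, m.+1); (m.+1, m); (m.+1, m.+1)].
Definition KL : seq keyT :=
  flatten [seq [seq (ab, q) | q <- quads (2 * m + 2) & realized m ab.1 ab.2 q] | ab <- pairs].

Lemma basisE : claimed_basis C m = map (mxK C m) KL.
Proof.
rewrite /claimed_basis /KL map_flatten -map_comp; congr flatten; apply: eq_map => ab /=.
by rewrite -map_comp.
Qed.

Lemma pairsP ab : ab \in pairs -> inX m [set: T] = inX m [set: T] /\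
  ((ab.1 == m) || (ab.1 == m.+1)) /\ ((ab.2 == m) || (ab.2 == m.+1)).
Proof.
by rewrite !inE => /or4P[] /eqP -> /=; rewrite !eqxx ?orbT.
Qed.

Lemma KL_real x : x \in KL -> exists y z : X, key y z = x.
Proof.
case/flatten_mapP => ab /pairsP [_ [h1 h2]] /mapP [q].
rewrite mem_filter => /andP[/existsP[y /existsP[z /and3P[/eqP cy /eqP cz /eqP rq]]] _] ->.
have iy : inX m y by rewrite /inX cy.
have iz : inX m z by rewrite /inX cz.
exists (Sub y iy), (Sub z iz); rewrite /key /= cy cz rq.
by case: ab {h1 h2 cy cz}.
Qed.

Lemma key_in_KL (y z : X) : key y z \in KL.
Proof.
apply/flatten_mapP; exists (#|val y|, #|val z|).
  by case: (cardXt y) => ->; case: (cardXt z) => ->; rewrite !inE eqxx ?orbT.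
apply/mapP; exists (rho m (val y) (val z)) => //.
rewrite mem_filter; apply/andP; split.
  by apply/existsP; exists (val y); apply/existsP; exists (val z); rewrite !eqxx.
by apply: mem_quads; apply: card_ltN.
Qed.

Lemma uniq_pairs : uniq pairs.
Proof.
have h : (m == m.+1) = false by lia.
have h' : (m.+1 == m) = false by lia.
by rewrite /= !inE !xpair_eqE !eqxx h h'.
Qed.

Lemma uniq_KL : uniq KL.
Proof.
apply: (uniq_flatten_map (g := fun x => x.1)) => [|ab _|ab x /mapP[q _ ->] //].
  exact: uniq_pairs.
rewrite map_inj_uniq; first by apply: filter_uniq; apply: uniq_quads.
by move=> q1 q2 [].
Qed.

Lemma basis_free : free (claimed_basis C m).
Proof.
rewrite basisE; suff: free (in_tuple (map (mxK C m) KL)) by [].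
apply/freeP => k hk i.
have hi : (i < size KL)%N by rewrite -(size_map (mxK C m)); exact: ltn_ord.
pose d0 : keyT := ((0, 0), (0, 0, 0, 0))%N.
have [y [z hyz]] := KL_real (mem_nth d0 hi).
have := congr1 (fun M => ent M y z) hk; rewrite /= ent0 ent_sum.
rewrite (bigD1 i) //= big1 ?addr0.
  rewrite ent_scale (nth_map d0) // ent_mxK hyz eqxx mulr1; exact.
move=> j ji; rewrite ent_scale (nth_map d0); last by rewrite -(size_map (mxK C m)); exact: ltn_ord.
rewrite ent_mxK hyz nth_uniq ?uniq_KL //; last by rewrite -(size_map (mxK C m)); exact: ltn_ord.
by rewrite (inj_eq val_inj) eq_sym (negbTE ji) mulr0.
Qed.

Lemma span_inT M : M \in <<claimed_basis C m>>%VS -> inT C m M.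
Proof.
move=> hM; rewrite (coord_span (X := in_tuple (claimed_basis C m)) hM).
apply: inT_sum => i; apply: inT_scale.
have hi : (i < size KL)%N by rewrite -(size_map (mxK C m)) -basisE; exact: ltn_ord.
pose d0 : keyT := ((0, 0), (0, 0, 0, 0))%N.
have [y [z hyz]] := KL_real (mem_nth d0 hi).
have E : forall j, (j < size KL)%N -> nth 0 (claimed_basis C m) j = mxK C m (nth d0 KL j).
  by move=> j hj; rewrite basisE (nth_map d0).
have -> : (in_tuple (claimed_basis C m))`_i = mxK C m (nth d0 KL i) by exact: E.
rewrite -hyz; exact: mxK_inT.
Qed.

Lemma inT_span M : inT C m M -> M \in <<claimed_basis C m>>%VS.
Proof.
move=> /keyfun_inT kM; rewrite (decomp kM); apply: memv_suml => k _.
case: (eqVneq (coef M k) 0) => [->|]; first by rewrite scale0r mem0v.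
rewrite /coef; case: pickP => [[y z] /= /eqP hk _|]; last by rewrite eqxx.
apply: memvZ; rewrite -hk; apply: memv_span; rewrite basisE; apply: map_f.
exact: key_in_KL.
Qed.

End P7.

Unset Implicit Arguments.

Theorem corollary4p12 (C : numClosedFieldType) (m : nat) :
  (3 <= m)%N ->
  free (claimed_basis C m) /\
  (forall M : 'M[C]_(#|Xt m|), inT C m M <-> M \in <<claimed_basis C m>>%VS).
Proof.
move=> _; split; first exact: basis_free.
by move=> M; split; [apply: inT_span | apply: span_inT].
Qed.
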